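(* Let $\mathcal V=\mathcal V_1\sqcup\mathcal V_{-1}$ be a finite set, $\mathcal E\subseteq\mathcal V_1\times\mathcal V_{-1}$, and $P:\mathcal V\to(0,\infty)$ with $p_v=P(\{v\})$. Then $\mathsf{OptProb}(\mathcal V_1,\mathcal V_{-1},\mathcal E,P)$ terminates and returns a pair $(q,z)$ in which $q$ is the (unique) minimizer of $$\min_{q\in\mathbb R^{\mathcal V}}\sum_{v\in\mathcal V}-p_v\log q_v\quad\text{s.t.}\quad q\ge\mathbf 0,\ Mq\le\mathbf 1,$$ where $M$ is the matrix associated with the bipartite graph $(\mathcal V_1,\mathcal V_{-1},\mathcal E)$.
   Context: For disjoint finite sets $\mathcal A,\mathcal B$, $\mathcal E\subseteq\mathcal A\times\mathcal B$, and weights $P:\mathcal A\cup\mathcal B\to[0,\infty)$ with $P(S)=\sum_{v\in S}P(\{v\})$: $E$ is the edge incidence matrix ($E_{e,w}=1$ if $w$ is an endpoint of $e$, else $0$) and $M=\begin{pmatrix}E\\ I\end{pmatrix}$ with rows indexed by $\mathcal E\sqcup(\mathcal A\cup\mathcal B)$. Define $r\in\mathbb R^{\mathcal A\cup\mathcal B}$: if $P(\mathcal A),P(\mathcal B)>0$, $r_v=P(\{v\})P(\mathcal A\cup\mathcal B)/P(\mathcal A)$ for $v\in\mathcal A$ and $r_v=P(\{v\})P(\mathcal A\cup\mathcal B)/P(\mathcal B)$ for $v\in\mathcal B$; otherwise $r_v=P(\{v\})$. $\mathsf{LinOpt}(\mathcal A,\mathcal B,\mathcal E,P)$ takes an optimal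 $y\in\{0,1\}^{\mathcal A\cup\mathcal B}$ of $\max r^{\top}y$ s.t. $y\ge\mathbf 0$, $My\le\mathbf 1$, and an optimal $z$ of the dual $\min\mathbf 1^{\top}z$ s.t. $z\ge\mathbf 0$, $M^{\top}z\ge r$, and returns $\mathcal A^+=\{v\in\mathcal A:y_v=1\}$, $\mathcal A^-=\mathcal A\setminus\mathcal A^+$, $\mathcal B^+=\{v\in\mathcal B:y_v=1\}$, $\mathcal B^-=\mathcal B\setminus\mathcal B^+$, and $z^{\mathrm{lin}}=z$. $\mathsf{OptProb}(\mathcal A,\mathcal B,\mathcal E,P)$ is the recursive procedure: compute $(\mathcal A^+,\mathcal A^-,\mathcal B^+,\mathcal B^-,z^{\mathrm{lin}})=\mathsf{LinOpt}(\mathcal A,\mathcal B,\mathcal E,P)$. If $P(\mathcal A^+)P(\mathcal B^+)>P(\mathcal A^-)P(\mathcal B^-)$: let $\mathcal E'=\mathcal E\cap(\mathcal A^+\times\mathcal B^-)$, $\mathcal E''=\mathcal E\cap(\mathcal A^-\times\mathcal B^+)$, $(q',z')=\mathsf{OptProb}(\mathcal A^+,\mathcal B^-,\mathcal E',P)$, $(q'',z'')=\mathsf{OptProb}(\mathcal A^-,\mathcal B^+,\mathcal E'',P)$; set $q_v=q'_v$ for $v\in\mathcal A^+\cup\mathcal B^-$ and $q_v=q''_v$ for $v\in\mathcal A^-\cup\mathcal B^+$; set $z_e=z'_e$ for $e\in\mathcal E'\cup\mathcal A^+\cup\mathcal B^-$, $z_e=z''_e$ for $e\in\mathcal E''\cup\mathcal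 A^-\cup\mathcal B^+$, and $z_e=0$ for other $e\in\mathcal E$. Otherwise: set $q_v=P(\mathcal A)/P(\mathcal A\cup\mathcal B)$ for $v\in\mathcal A$, $q_v=P(\mathcal B)/P(\mathcal A\cup\mathcal B)$ for $v\in\mathcal B$, and $z=z^{\mathrm{lin}}$. Return $(q,z)$. The claim holds for any choice of optimal solutions made by $\mathsf{LinOpt}$. *)

(* Defs.v *)
From HB Require Import structures.
From mathcomp Require Import all_boot all_order all_algebra.
From mathcomp Require Import all_classical all_reals all_analysis.

Set Implicit Arguments.
Unset Strict Implicit.
Unset Printing Implicit Defensive.

Import Order.TTheory GRing.Theory Num.Theory.
Local Open Scope ring_scope.

(* Conventions: the vertex universe is a finType T; all vertex sets are
   {set T}; vectors in R^S are functions T -> R of which only the values on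
   S matter.  The matrix M = (E ; I) of (A,B,E) acts on y : T -> R by
   (My)_e = sum_{w in A u B, w endpoint of e} y_w  (edge rows) and
   (My)_v = y_v  (identity rows). *)

Section OptProb.
Variables (R : realType) (T : finType).

Definition Pw (P : T -> R) (S : {set T}) : R := \sum_(v in S) P v.

Definition incid (e : T * T) (w : T) : bool := (e.1 == w) || (e.2 == w).

Definition rvec (P : T -> R) (A B : {set T}) (v : T) : R :=
  if (0 < Pw P A) && (0 < Pw P B) then
    (if v \in A then P v * Pw P (A :|: B) / Pw P A
     else P v * Pw P (A :|: B) / Pw P B)
  else P v.

Definition primal_feas (A B : {set T}) (E : {set T * T}) (y : T -> R) : Prop :=
  (forall v, v \in A :|: B -> 0 <= y v) /\
  (forall e, e \in E -> \sum_(w in A :|: B | incid e w) y w <= 1) /\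
  (forall v, v \in A :|: B -> y v <= 1).

Definition primal_obj (P : T -> R) (A B : {set T}) (y : T -> R) : R :=
  \sum_(v in A :|: B) rvec P A B v * y v.

(* z = (zE, zV) in R^(E u (A u B)); z >= 0 and M^T z >= r *)
Definition dual_feas (P : T -> R) (A B : {set T}) (E : {set T * T})
    (zE : T * T -> R) (zV : T -> R) : Prop :=
  (forall e, e \in E -> 0 <= zE e) /\
  (forall v, v \in A :|: B -> 0 <= zV v) /\
  (forall v, v \in A :|: B ->
     rvec P A B v <= \sum_(e in E | incid e v) zE e + zV v).

Definition dual_obj (A B : {set T}) (E : {set T * T})
    (zE : T * T -> R) (zV : T -> R) : R :=
  \sum_(e in E) zE e + \sum_(v in A :|: B) zV v.

Definition linopt (P : T -> R) (A B : {set T}) (E : {set T * T})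
    (y : T -> R) (zE : T * T -> R) (zV : T -> R) : Prop :=
  (forall v, v \in A :|: B -> (y v = 0 \/ y v = 1)) /\
  primal_feas A B E y /\
  (forall y', primal_feas A B E y' -> primal_obj P A B y' <= primal_obj P A B y) /\
  dual_feas P A B E zE zV /\
  (forall zE' zV', dual_feas P A B E zE' zV' ->
     dual_obj A B E zE zV <= dual_obj A B E zE' zV').

Definition plus_part (y : T -> R) (S : {set T}) : {set T} := [set v in S | y v == 1].
Definition minus_part (y : T -> R) (S : {set T}) : {set T} := S :\: plus_part y S.

Definition split_cond (P : T -> R) (A B : {set T}) (y : T -> R) : bool :=
  Pw P (minus_part y A) * Pw P (minus_part y B)
    < Pw P (plus_part y A) * Pw P (plus_part y B).

Definition restrE (E : {set T * T}) (S1 S2 : {set T}) : {set T * T} :=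
  E :&: finset.setX S1 S2.

Definition qbase (P : T -> R) (A B : {set T}) (v : T) : R :=
  if v \in A then Pw P A / Pw P (A :|: B)
  else if v \in B then Pw P B / Pw P (A :|: B) else 0.

(* [optprob P A B E q zE zV]: some run of OptProb(A,B,E,P) (for some choice
   of optimal solutions in the calls to LinOpt) returns (q, (zE,zV)). *)
Inductive optprob (P : T -> R) :
  {set T} -> {set T} -> {set T * T} -> (T -> R) -> (T * T -> R) -> (T -> R) -> Prop :=
| optprob_split A B E y zE zV q1 zE1 zV1 q2 zE2 zV2 :
    linopt P A B E y zE zV ->
    split_cond P A B y ->
    optprob P (plus_part y A) (minus_part y B)
      (restrE E (plus_part y A) (minus_part y B)) q1 zE1 zV1 ->
    optprob P (minus_part y A) (plus_part y B)
      (restrE E (minus_part y A) (plus_part y B)) q2 zE2 zV2 ->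
    optprob P A B E
      (fun v => if v \in plus_part y A :|: minus_part y B then q1 v else q2 v)
      (fun e => if e \in restrE E (plus_part y A) (minus_part y B) then zE1 e
                else if e \in restrE E (minus_part y A) (plus_part y B) then zE2 e
                else 0)
      (fun v => if v \in plus_part y A :|: minus_part y B then zV1 v else zV2 v)
| optprob_base A B E y zE zV :
    linopt P A B E y zE zV ->
    ~~ split_cond P A B y ->
    optprob P A B E (qbase P A B) zE zV.

(* Termination of the nondeterministic procedure: at every call LinOpt has
   an admissible output, and for every admissible output the recursive
   calls (if made) terminate.  Being inductive, this excludes infinite runs. *)
Inductive optprob_terminates (P : T -> R) :
  {set T} -> {set T} -> {set T * T} -> Prop :=
| optprob_term A B E :
    (exists y zE zV, linopt P A B E y zE zV) ->
    (forall y zE zV, linopt P A B E y zE zV -> split_cond P A B y ->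
       optprob_terminates P (plus_part y A) (minus_part y B)
         (restrE E (plus_part y A) (minus_part y B))) ->
    (forall y zE zV, linopt P A B E y zE zV -> split_cond P A B y ->
       optprob_terminates P (minus_part y A) (plus_part y B)
         (restrE E (minus_part y A) (plus_part y B))) ->
    optprob_terminates P A B E.

(* objective sum_v -p_v log q_v, with the value +oo when some q_v <= 0
   (the usual convention -log 0 = +oo; feasibility already gives q >= 0) *)
Definition neglog_obj (P : T -> R) (V : {set T}) (q : T -> R) : \bar R :=
  if [forall v in V, 0 < q v] then (\sum_(v in V) - (P v * ln (q v)))%:E
  else +oo%E.

Definition unique_minimizer (P : T -> R) (A B : {set T}) (E : {set T * T})
    (q : T -> R) : Prop :=
  primal_feas A B E q /\
  (forall q', primal_feas A B E q' ->
     (neglog_obj P (A :|: B) q <= neglog_obj P (A :|: B) q')%E) /\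
  (forall q', primal_feas A B E q' ->
     (neglog_obj P (A :|: B) q' <= neglog_obj P (A :|: B) q)%E ->
     forall v, v \in A :|: B -> q' v = q v).

End OptProb.

(* Main.v *)
Require Import Defs.
From HB Require Import structures.
From mathcomp Require Import all_boot all_order all_algebra.
From mathcomp Require Import all_classical all_reals all_analysis.
From mathcomp Require Import ring lra.
Set Implicit Arguments.
Unset Strict Implicit.
Unset Printing Implicit Defensive.
Import Order.TTheory GRing.Theory Num.Theory.
Import numFieldNormedType.Exports.
Local Open Scope ring_scope.

Section Basics.
Variables (R : realType) (T : finType) (P : T -> R).

Definition inv (A B : {set T}) (E : {set T * T}) :=
  [/\ [disjoint A & B], E \subset finset.setX A B &
      forall v, v \in A :|: B -> 0 < P v].

Lemma sum_setU (F : T -> R) (X Y : {set T}) : [disjoint X & Y] ->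
  \sum_(v in X :|: Y) F v = \sum_(v in X) F v + \sum_(v in Y) F v.
Proof. move=> d; rewrite -bigU //; apply: eq_bigl => v; by rewrite !inE. Qed.

Lemma Pw_ge0 (S : {set T}) : (forall v, v \in S -> 0 <= P v) -> 0 <= Pw P S.
Proof. move=> h; rewrite /Pw; apply: sumr_ge0 => v; exact: h. Qed.

Lemma Pw_gt0 (S : {set T}) v : (forall w, w \in S -> 0 < P w) -> v \in S -> 0 < Pw P S.
Proof.
move=> h vS; rewrite /Pw (bigD1 v) //=.
apply: (lt_le_trans (h v vS)); rewrite lerDl; apply: sumr_ge0 => w /andP[wS _].
exact: ltW (h w wS).
Qed.

Lemma Pw_sub (S1 S2 : {set T}) : S1 \subset S2 -> (forall v, v \in S2 -> 0 <= P v) ->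
  Pw P S1 <= Pw P S2.
Proof.
move=> sub h; rewrite /Pw [X in _ <= X](big_setID S1) /= (finset.setIidPr sub) lerDl.
apply: sumr_ge0 => v; rewrite inE => /andP[_ vS2]; exact: h.
Qed.

Lemma Pw_U (X Y : {set T}) : [disjoint X & Y] -> Pw P (X :|: Y) = Pw P X + Pw P Y.
Proof. exact: sum_setU. Qed.

Lemma sum_incid (S : {set T}) (e : T * T) (F : T -> R) :
  e.1 \in S -> e.2 \in S -> e.1 != e.2 ->
  \sum_(w in S | incid e w) F w = F e.1 + F e.2.
Proof.
move=> h1 h2 h12.
rewrite (bigD1 e.1) /=; last by rewrite h1 /incid eqxx.
rewrite (bigD1 e.2) /=; last by rewrite h2 /incid eqxx orbT eq_sym h12.
rewrite big1 ?addr0 // => w /andP[/andP[/andP[_ h] n1] n2].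
by move: h; rewrite /incid [e.1 == w]eq_sym [e.2 == w]eq_sym (negbTE n1) (negbTE n2).
Qed.

Lemma notAB {A B : {set T}} {v} : [disjoint A & B] -> v \in B -> (v \in A) = false.
Proof. move=> d vB; exact: disjointFl d vB. Qed.

Lemma notBA {A B : {set T}} {v} : [disjoint A & B] -> v \in A -> (v \in B) = false.
Proof. move=> d vA; exact: disjointFr d vA. Qed.

Lemma inv_edge {A B E e} : inv A B E -> e \in E -> [/\ e.1 \in A, e.2 \in B & e.1 != e.2].
Proof.
case=> dAB sE _ eE; move: (fintype.subsetP sE e eE); case: e {eE} => a b /=.
rewrite finset.in_setX => /andP[aA bB]; split => //.
by apply/eqP => ab; move: (notBA dAB aA); rewrite ab bB.
Qed.

Lemma edge_sum {A B E e} (F : T -> R) : inv A B E -> e \in E ->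
  \sum_(w in A :|: B | incid e w) F w = F e.1 + F e.2.
Proof.
move=> iv eE; case: (inv_edge iv eE) => h1 h2 h12; apply: sum_incid => //.
  by rewrite inE h1.
by rewrite inE h2 orbT.
Qed.

Lemma pfeasP {A B E} (y : T -> R) : inv A B E -> primal_feas A B E y <->
  (forall v, v \in A :|: B -> 0 <= y v <= 1) /\ (forall e, e \in E -> y e.1 + y e.2 <= 1).
Proof.
move=> iv; split.
  case=> h0 [hE h1]; split; first by move=> v vV; rewrite h0 ?h1.
  by move=> e eE; rewrite -(edge_sum y iv eE); exact: hE.
case=> hb hE; split; first by move=> v /hb /andP[].
split; last by move=> v /hb /andP[].
by move=> e eE; rewrite (edge_sum y iv eE); exact: hE.
Qed.

Lemma inv_restr {A B E} (A' B' : {set T}) : inv A B E -> A' \subset A -> B' \subset B ->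
  inv A' B' (restrE E A' B').
Proof.
case=> dAB sE hP sA sB; split.
- exact: (disjointWl sA (disjointWr sB dAB)).
- by rewrite /restrE; exact: subsetIr.
- move=> v vV; apply: hP; exact: (fintype.subsetP (finset.setUSS sA sB)).
Qed.

Lemma plusE (y : T -> R) (S : {set T}) v : (v \in plus_part y S) = (v \in S) && (y v == 1).
Proof. by rewrite /plus_part inE. Qed.

Lemma minusE (y : T -> R) (S : {set T}) v : (v \in minus_part y S) = (v \in S) && (y v != 1).
Proof. by rewrite /minus_part /plus_part !inE; case: (v \in S); case: (y v == 1). Qed.

Lemma plus_sub (y : T -> R) (S : {set T}) : plus_part y S \subset S.
Proof. by apply/fintype.subsetP => v; rewrite plusE => /andP[]. Qed.

Lemma minus_sub (y : T -> R) (S : {set T}) : minus_part y S \subset S.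
Proof. by apply/fintype.subsetP => v; rewrite minusE => /andP[]. Qed.

Lemma restrE_in (E : {set T * T}) (A' B' : {set T}) a b :
  ((a, b) \in restrE E A' B') = [&& (a, b) \in E, a \in A' & b \in B'].
Proof. by rewrite /restrE inE finset.in_setX. Qed.

Lemma Pw_mono {A B E} (S1 S2 : {set T}) : inv A B E -> S1 \subset S2 -> S2 \subset A :|: B ->
  Pw P S1 <= Pw P S2.
Proof.
case=> _ _ hP s12 s2; apply: Pw_sub => // v vS; apply: ltW; apply: hP.
exact: (fintype.subsetP s2).
Qed.

Lemma Pw_nneg {A B E} (S : {set T}) : inv A B E -> S \subset A :|: B -> 0 <= Pw P S.
Proof.
case=> _ _ hP s; apply: Pw_ge0 => v vS; apply: ltW; apply: hP; exact: (fintype.subsetP s).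
Qed.

Section Lin.
Variables (A B : {set T}) (E : {set T * T}) (y : T -> R) (zE : T * T -> R) (zV : T -> R).
Hypothesis lo : linopt P A B E y zE zV.

Lemma lin01 v : v \in A :|: B -> y v != 1 -> y v = 0.
Proof. case: lo => h _ vV; case: (h v vV) => -> //; by rewrite eqxx. Qed.

Lemma lin_feas : primal_feas A B E y.
Proof. by case: lo => _ []. Qed.

Lemma lin_opt y' : primal_feas A B E y' -> primal_obj P A B y' <= primal_obj P A B y.
Proof. by case: lo => _ [_ [h _]]; exact: h. Qed.
End Lin.

End Basics.


Section Hall.
Variables (R : realType) (T : finType) (P : T -> R).

Definition nbrA (E : {set T * T}) (S Tb : {set T}) : {set T} :=
  [set a in S | [exists b in Tb, (a, b) \in E]].
Definition nbrB (E : {set T * T}) (S Sa : {set T}) : {set T} :=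
  [set b in S | [exists a in Sa, (a, b) \in E]].

Lemma nbrAE E S Tb a : (a \in nbrA E S Tb) = (a \in S) && [exists b in Tb, (a, b) \in E].
Proof. by rewrite /nbrA inE. Qed.
Lemma nbrBE E S Sa b : (b \in nbrB E S Sa) = (b \in S) && [exists a in Sa, (a, b) \in E].
Proof. by rewrite /nbrB inE. Qed.

Lemma sum_sub_cond (S S1 : {set T}) (F : T -> R) : S1 \subset S ->
  \sum_(v in S) (if v \in S1 then F v else 0) = \sum_(v in S1) F v.
Proof.
move=> s; rewrite -big_mkcondr /=; apply: eq_bigl => v.
case vS1: (v \in S1); rewrite ?andbF ?andbT //; exact: (fintype.subsetP s).
Qed.

Lemma swap_opt A B E y zE zV (X Y : {set T}) :
  inv P A B E -> linopt P A B E y zE zV -> X \subset A :|: B -> Y \subset A :|: B ->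
  (forall v, v \in X -> y v = 0) -> (forall v, v \in Y -> y v = 1) ->
  primal_feas A B E (fun v => if v \in X then 1 else if v \in Y then 0 else y v) ->
  \sum_(v in X) rvec P A B v <= \sum_(v in Y) rvec P A B v.
Proof.
move=> iv lo sX sY hX hY f2.
have := lin_opt lo f2; rewrite /primal_obj.
have -> : \sum_(v in A :|: B) rvec P A B v * (if v \in X then 1 else if v \in Y then 0 else y v) =
   \sum_(v in A :|: B) rvec P A B v * y v +
   (\sum_(v in A :|: B) (if v \in X then rvec P A B v else 0) -
    \sum_(v in A :|: B) (if v \in Y then rvec P A B v else 0)).
  rewrite -sumrB -big_split /=; apply: eq_bigr => v _.
  case: ifP => vX.
    have vY : (v \in Y) = false.
      apply/negbTE/negP => vY; move: (hY v vY); rewrite (hX v vX) => /eqP.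
      by rewrite eq_sym oner_eq0.
    by rewrite vY (hX v vX) mulr1 mulr0 add0r subr0.
  case: ifP => vY; first by rewrite (hY v vY) mulr0 mulr1 add0r addrN.
  by rewrite subrr addr0.
rewrite !sum_sub_cond //.
move=> h; lra.
Qed.

Lemma sum_rvecA (A B X : {set T}) : [disjoint A & B] -> 0 < Pw P A -> 0 < Pw P B ->
  X \subset A -> \sum_(v in X) rvec P A B v = Pw P X * Pw P (A :|: B) / Pw P A.
Proof.
move=> d hA hB sX; rewrite [Pw P X]/Pw !mulr_suml; apply: eq_bigr => v vX.
by rewrite /rvec hA hB /= (fintype.subsetP sX v vX).
Qed.

Lemma sum_rvecB (A B X : {set T}) : [disjoint A & B] -> 0 < Pw P A -> 0 < Pw P B ->
  X \subset B -> \sum_(v in X) rvec P A B v = Pw P X * Pw P (A :|: B) / Pw P B.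
Proof.
move=> d hA hB sX; rewrite [Pw P X]/Pw !mulr_suml; apply: eq_bigr => v vX.
by rewrite /rvec hA hB /= (notAB d (fintype.subsetP sX v vX)).
Qed.

Lemma alg1 (t n a b w : R) : 0 < a -> 0 < b -> 0 < w ->
  t * w / b <= n * w / a -> t * a / b <= n.
Proof.
move=> ha hb hw h.
have e1 : t * a / b = (t * w / b) * (a / w) by field; rewrite !gt_eqF.
have e2 : n = (n * w / a) * (a / w) by field; rewrite !gt_eqF.
rewrite e1 [X in _ <= X]e2; apply: ler_wpM2r => //.
by apply: divr_ge0; apply: ltW.
Qed.

Lemma WU (A B : {set T}) : [disjoint A & B] -> Pw P (A :|: B) = Pw P A + Pw P B.
Proof. exact: Pw_U. Qed.

Lemma hall1 A B E y zE zV : inv P A B E -> linopt P A B E y zE zV ->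
  0 < Pw P A -> 0 < Pw P B -> forall Tb : {set T}, Tb \subset minus_part y B ->
  Pw P Tb * Pw P A / Pw P B <= Pw P (nbrA E (plus_part y A) Tb).
Proof.
move=> iv lo hA hB Tb sT.
case: (iv) => dAB sE hP.
set N := nbrA E (plus_part y A) Tb.
have sTB : Tb \subset B := fintype.subset_trans sT (minus_sub y B).
have sNA : N \subset A.
  by apply/fintype.subsetP => a; rewrite nbrAE plusE => /andP[/andP[aA _] _].
have hT0 : forall v, v \in Tb -> y v = 0.
  move=> v vT; move: (fintype.subsetP sT v vT); rewrite minusE => /andP[vB yv].
  by apply: (lin01 lo) => //; rewrite inE vB orbT.
have hN1 : forall v, v \in N -> y v = 1.
  by move=> v; rewrite nbrAE plusE => /andP[/andP[_ /eqP]].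
have hW : 0 < Pw P (A :|: B) by rewrite WU // addr_gt0.
have := swap_opt iv lo (fintype.subset_trans sTB (finset.subsetUr A B))
   (fintype.subset_trans sNA (finset.subsetUl A B)) hT0 hN1.
rewrite (sum_rvecB dAB hA hB sTB) (sum_rvecA dAB hA hB sNA).
move=> h; apply: (alg1 hA hB hW); apply: h.
apply/(pfeasP _ iv); case/(pfeasP _ iv): (lin_feas lo) => yb yE; split.
  move=> v vV; case: ifP => _; first by rewrite ler01 lexx.
  case: ifP => _; first by rewrite lexx ler01.
  exact: yb.
move=> e eE; case: (inv_edge iv eE) => h1 h2 _.
have n1 : (e.1 \in Tb) = false.
  by apply/negbTE/negP => /(fintype.subsetP sTB) h; move: (notBA dAB h1); rewrite h.
have n2 : (e.2 \in N) = false.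
  by apply/negbTE/negP => /(fintype.subsetP sNA) h; move: (notAB dAB h2); rewrite h.
have V1 : e.1 \in A :|: B by rewrite inE h1.
have V2 : e.2 \in A :|: B by rewrite inE h2 orbT.
rewrite n1 n2; case: ifP => e1N; case: ifP => e2T.
- by rewrite add0r.
- by rewrite add0r; case/andP: (yb _ V2).
- have ny : y e.1 != 1.
    apply/negP => /eqP y1; move: e1N; rewrite nbrAE plusE h1 y1 eqxx /=.
    move/negbT/negP; apply; apply/existsP; exists e.2; rewrite e2T /=.
    by rewrite -surjective_pairing.
  by rewrite (lin01 lo V1 ny) add0r.
- exact: yE.
Qed.

Lemma hall2 A B E y zE zV : inv P A B E -> linopt P A B E y zE zV ->
  0 < Pw P A -> 0 < Pw P B -> forall Sa : {set T}, Sa \subset minus_part y A ->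
  Pw P Sa * Pw P B / Pw P A <= Pw P (nbrB E (plus_part y B) Sa).
Proof.
move=> iv lo hA hB Sa sS.
case: (iv) => dAB sE hP.
set N := nbrB E (plus_part y B) Sa.
have sSA : Sa \subset A := fintype.subset_trans sS (minus_sub y A).
have sNB : N \subset B.
  by apply/fintype.subsetP => a; rewrite nbrBE plusE => /andP[/andP[aA _] _].
have hS0 : forall v, v \in Sa -> y v = 0.
  move=> v vS; move: (fintype.subsetP sS v vS); rewrite minusE => /andP[vA yv].
  by apply: (lin01 lo) => //; rewrite inE vA.
have hN1 : forall v, v \in N -> y v = 1.
  by move=> v; rewrite nbrBE plusE => /andP[/andP[_ /eqP]].
have hW : 0 < Pw P (A :|: B) by rewrite WU // addr_gt0.
have := swap_opt iv lo (fintype.subset_trans sSA (finset.subsetUl A B))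
   (fintype.subset_trans sNB (finset.subsetUr A B)) hS0 hN1.
rewrite (sum_rvecA dAB hA hB sSA) (sum_rvecB dAB hA hB sNB).
move=> h; apply: (alg1 hB hA hW); apply: h.
apply/(pfeasP _ iv); case/(pfeasP _ iv): (lin_feas lo) => yb yE; split.
  move=> v vV; case: ifP => _; first by rewrite ler01 lexx.
  case: ifP => _; first by rewrite lexx ler01.
  exact: yb.
move=> e eE; case: (inv_edge iv eE) => h1 h2 _.
have n1 : (e.1 \in N) = false.
  by apply/negbTE/negP => /(fintype.subsetP sNB) h; move: (notBA dAB h1); rewrite h.
have n2 : (e.2 \in Sa) = false.
  by apply/negbTE/negP => /(fintype.subsetP sSA) h; move: (notAB dAB h2); rewrite h.
have V1 : e.1 \in A :|: B by rewrite inE h1.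
have V2 : e.2 \in A :|: B by rewrite inE h2 orbT.
rewrite n1 n2; case: ifP => e1S; case: ifP => e2N.
- by rewrite addr0.
- have ny : y e.2 != 1.
    apply/negP => /eqP y1; move: e2N; rewrite nbrBE plusE h2 y1 eqxx /=.
    move/negbT/negP; apply; apply/existsP; exists e.1; rewrite e1S /=.
    by rewrite -surjective_pairing.
  by rewrite (lin01 lo V2 ny) addr0.
- by rewrite addr0; case/andP: (yb _ V1).
- exact: yE.
Qed.

End Hall.


Section Lemmas.
Variables (R : realType) (T : finType) (P : T -> R).

Lemma split_pos A B E y : inv P A B E -> split_cond P A B y ->
  0 < Pw P (plus_part y A) /\ 0 < Pw P (plus_part y B).
Proof.
move=> iv sp; move: sp; rewrite /split_cond.
have sA (x : {set T}) : x \subset A -> x \subset A :|: B.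
  by move=> h; apply: fintype.subset_trans h (finset.subsetUl A B).
have sB (x : {set T}) : x \subset B -> x \subset A :|: B.
  by move=> h; apply: fintype.subset_trans h (finset.subsetUr A B).
have h1 := Pw_nneg iv (sA _ (plus_sub y A)).
have h2 := Pw_nneg iv (sB _ (plus_sub y B)).
have h3 := Pw_nneg iv (sA _ (minus_sub y A)).
have h4 := Pw_nneg iv (sB _ (minus_sub y B)).
move=> h; split; nra.
Qed.

Lemma PwA_pos A B E y : inv P A B E -> split_cond P A B y -> 0 < Pw P A /\ 0 < Pw P B.
Proof.
move=> iv sp; case: (split_pos iv sp) => ha hb; split.
  apply: lt_le_trans ha _; apply: Pw_mono iv (plus_sub y A) (finset.subsetUl A B).
apply: lt_le_trans hb _; apply: Pw_mono iv (plus_sub y B) (finset.subsetUr A B).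
Qed.

Lemma y_edge A B E y zE zV a b : inv P A B E -> linopt P A B E y zE zV ->
  (a, b) \in E -> y b = 1 -> y a != 1.
Proof.
move=> iv lo abE yb; apply/negP => /eqP ya.
case/(pfeasP _ iv): (lin_feas lo) => _ yE.
by move: (yE _ abE); rewrite /= ya yb -[X in _ <= X]addr0 lerD2l ler10.
Qed.

Lemma y_edge' A B E y zE zV a b : inv P A B E -> linopt P A B E y zE zV ->
  (a, b) \in E -> y a = 1 -> y b != 1.
Proof.
move=> iv lo abE ya; apply/negP => /eqP yb.
case/(pfeasP _ iv): (lin_feas lo) => _ yE.
by move: (yE _ abE); rewrite /= ya yb -[X in _ <= X]addr0 lerD2l ler10.
Qed.

Lemma LB A B E q zE zV : optprob P A B E q zE zV -> inv P A B E ->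
  forall rho, 0 < rho ->
  (forall Tb : {set T}, Tb \subset B -> rho * Pw P Tb <= Pw P (nbrA E A Tb)) ->
  forall b, b \in B -> q b * (1 + rho) <= 1.
Proof.
elim=> {A B E q zE zV}.
- move=> A B E y zE zV q1 zE1 zV1 q2 zE2 zV2 lo sp _ IH1 _ IH2 iv rho rho0 hall b bB.
  case: (iv) => dAB sE hP.
  have [hA hB] := PwA_pos iv sp.
  have hrho : rho <= Pw P A / Pw P B.
    rewrite ler_pdivlMr //; apply: le_trans (hall B (fintype.subxx B)) _.
    apply: (Pw_mono iv _ (finset.subsetUl A B)).
    by apply/fintype.subsetP => a; rewrite nbrAE => /andP[].
  case yb: (y b == 1).
  + have bV1 : (b \in plus_part y A :|: minus_part y B) = false.
      by rewrite inE plusE minusE yb (notAB dAB bB) /= andbF.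
    rewrite /= bV1; apply: IH2.
    * exact: inv_restr iv (minus_sub y A) (plus_sub y B).
    * exact: rho0.
    * move=> Tb sT.
      have sTB : Tb \subset B := fintype.subset_trans sT (plus_sub y B).
      apply: le_trans (hall Tb sTB) _.
      apply: (Pw_mono iv).
        apply/fintype.subsetP => a; rewrite !nbrAE => /andP[aA /existsP[b' /andP[b'T abE]]].
        have yb' : y b' = 1.
          by move: (fintype.subsetP sT b' b'T); rewrite plusE => /andP[_ /eqP].
        have ya := y_edge iv lo abE yb'.
        rewrite minusE aA ya /=; apply/existsP; exists b'; rewrite b'T /=.
        by rewrite restrE_in abE minusE aA ya plusE (fintype.subsetP sTB b' b'T) yb' eqxx.
      apply/fintype.subsetP => a; rewrite nbrAE minusE => /andP[/andP[aA _] _].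
      by rewrite inE aA.
    * by rewrite plusE bB yb.
  + have bV1 : (b \in plus_part y A :|: minus_part y B) = true.
      by rewrite inE plusE minusE yb bB orbT.
    rewrite /= bV1; apply: IH1.
    * exact: inv_restr iv (plus_sub y A) (minus_sub y B).
    * exact: rho0.
    * move=> Tb sT.
      have sTB : Tb \subset B := fintype.subset_trans sT (minus_sub y B).
      have h := hall1 iv lo hA hB sT.
      apply: le_trans (le_trans _ h) _.
        rewrite mulrC -mulrA; apply: ler_wpM2l.
          apply: (Pw_nneg iv); exact: fintype.subset_trans sTB (finset.subsetUr A B).
        exact: hrho.
      apply: (Pw_mono iv).
        apply/fintype.subsetP => a; rewrite !nbrAE => /andP[aA /existsP[b' /andP[b'T abE]]].
        rewrite aA /=; apply/existsP; exists b'; rewrite b'T /=.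
        by rewrite restrE_in abE aA (fintype.subsetP sT b' b'T).
      apply/fintype.subsetP => a; rewrite nbrAE plusE => /andP[/andP[aA _] _].
      by rewrite inE aA.
    * by rewrite minusE bB yb.
- move=> A B E y zE zV lo nsp iv rho rho0 hall b bB.
  case: (iv) => dAB sE hP.
  rewrite /qbase (notAB dAB bB) bB.
  have hB : 0 < Pw P B by apply: (Pw_gt0 _ bB) => w wB; apply: hP; rewrite inE wB orbT.
  have hA : 0 <= Pw P A by apply: Pw_nneg iv (finset.subsetUl A B).
  have h : rho * Pw P B <= Pw P A.
    apply: le_trans (hall B (fintype.subxx B)) _.
    apply: (Pw_mono iv _ (finset.subsetUl A B)).
    by apply/fintype.subsetP => a; rewrite nbrAE => /andP[].
  rewrite WU // mulrAC ler_pdivrMr ?addr_ge0 //; first lra.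
  by apply: lt_le_trans hB _; rewrite lerDr.
Qed.

End Lemmas.


Section Lemmas2.
Variables (R : realType) (T : finType) (P : T -> R).

Lemma LA A B E q zE zV : optprob P A B E q zE zV -> inv P A B E ->
  forall rho, 0 < rho ->
  (forall Sa : {set T}, Sa \subset A -> rho * Pw P Sa <= Pw P (nbrB E B Sa)) ->
  forall a, a \in A -> q a * (1 + rho) <= 1.
Proof.
elim=> {A B E q zE zV}.
- move=> A B E y zE zV q1 zE1 zV1 q2 zE2 zV2 lo sp _ IH1 _ IH2 iv rho rho0 hall a aA.
  case: (iv) => dAB sE hP.
  have [hA hB] := PwA_pos iv sp.
  have hrho : rho <= Pw P B / Pw P A.
    rewrite ler_pdivlMr //; apply: le_trans (hall A (fintype.subxx A)) _.
    apply: (Pw_mono iv _ (finset.subsetUr A B)).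
    by apply/fintype.subsetP => b; rewrite nbrBE => /andP[].
  case ya: (y a == 1).
  + have aV1 : (a \in plus_part y A :|: minus_part y B) = true.
      by rewrite inE plusE ya aA.
    rewrite /= aV1; apply: IH1.
    * exact: inv_restr iv (plus_sub y A) (minus_sub y B).
    * exact: rho0.
    * move=> Sa sS.
      have sSA : Sa \subset A := fintype.subset_trans sS (plus_sub y A).
      apply: le_trans (hall Sa sSA) _.
      apply: (Pw_mono iv).
        apply/fintype.subsetP => b; rewrite !nbrBE => /andP[bB /existsP[a' /andP[a'S abE]]].
        have ya' : y a' = 1.
          by move: (fintype.subsetP sS a' a'S); rewrite plusE => /andP[_ /eqP].
        have yb := y_edge' iv lo abE ya'.
        rewrite minusE bB yb /=; apply/existsP; exists a'; rewrite a'S /=.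
        by rewrite restrE_in abE minusE bB yb plusE (fintype.subsetP sSA a' a'S) ya' eqxx.
      apply/fintype.subsetP => b; rewrite nbrBE minusE => /andP[/andP[bB _] _].
      by rewrite inE bB orbT.
    * by rewrite plusE aA ya.
  + have aV1 : (a \in plus_part y A :|: minus_part y B) = false.
      by rewrite inE plusE minusE ya (notBA dAB aA) /= andbF.
    rewrite /= aV1; apply: IH2.
    * exact: inv_restr iv (minus_sub y A) (plus_sub y B).
    * exact: rho0.
    * move=> Sa sS.
      have sSA : Sa \subset A := fintype.subset_trans sS (minus_sub y A).
      have h := hall2 iv lo hA hB sS.
      apply: le_trans (le_trans _ h) _.
        rewrite mulrC -mulrA; apply: ler_wpM2l.
          apply: (Pw_nneg iv); exact: fintype.subset_trans sSA (finset.subsetUl A B).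
        exact: hrho.
      apply: (Pw_mono iv).
        apply/fintype.subsetP => b; rewrite !nbrBE => /andP[bB /existsP[a' /andP[a'S abE]]].
        rewrite bB /=; apply/existsP; exists a'; rewrite a'S /=.
        by rewrite restrE_in abE bB (fintype.subsetP sS a' a'S).
      apply/fintype.subsetP => b; rewrite nbrBE plusE => /andP[/andP[bB _] _].
      by rewrite inE bB orbT.
    * by rewrite minusE aA ya.
- move=> A B E y zE zV lo nsp iv rho rho0 hall a aA.
  case: (iv) => dAB sE hP.
  rewrite /qbase aA.
  have hA : 0 < Pw P A by apply: (Pw_gt0 _ aA) => w wA; apply: hP; rewrite inE wA.
  have hB : 0 <= Pw P B by apply: (Pw_nneg iv (finset.subsetUr A B)).
  have h : rho * Pw P A <= Pw P B.
    apply: le_trans (hall A (fintype.subxx A)) _.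
    apply: (Pw_mono iv _ (finset.subsetUr A B)).
    by apply/fintype.subsetP => b; rewrite nbrBE => /andP[].
  rewrite WU // mulrAC ler_pdivrMr ?addr_ge0 //; first lra.
  by apply: lt_le_trans hA _; rewrite lerDl.
Qed.

End Lemmas2.


Section Main.
Variables (R : realType) (T : finType) (P : T -> R).

Lemma part_eq (A B : {set T}) (y : T -> R) :
  A :|: B = (plus_part y A :|: minus_part y B) :|: (minus_part y A :|: plus_part y B).
Proof.
apply/setP => v; rewrite !finset.in_setU !plusE !minusE.
by case: (v \in A); case: (v \in B); case: (y v == 1).
Qed.

Lemma part_disj (A B : {set T}) (y : T -> R) : [disjoint A & B] ->
  [disjoint (plus_part y A :|: minus_part y B) & (minus_part y A :|: plus_part y B)].
Proof.
move=> d; rewrite disjoint_subset; apply/fintype.subsetP => v.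
rewrite !finset.in_setU !plusE !minusE inE /= !finset.in_setU !plusE !minusE.
case vA: (v \in A); first by rewrite (notBA d vA); case: (y v == 1).
by case: (v \in B); case: (y v == 1).
Qed.

Lemma split_set (S : {set T}) (y : T -> R) : S = plus_part y S :|: minus_part y S.
Proof.
apply/setP => v; rewrite !finset.in_setU !plusE !minusE.
by case: (v \in S); case: (y v == 1).
Qed.

Lemma split_disj (S1 S2 : {set T}) (y : T -> R) : [disjoint plus_part y S1 & minus_part y S2].
Proof.
rewrite disjoint_subset; apply/fintype.subsetP => v.
by rewrite plusE inE /= minusE => /andP[_ ->]; rewrite andbF.
Qed.

Lemma pfeas_restr A B E (A' B' : {set T}) (q' : T -> R) : inv P A B E ->
  A' \subset A -> B' \subset B -> primal_feas A B E q' -> primal_feas A' B' (restrE E A' B') q'.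
Proof.
move=> iv sA sB f; have iv' := inv_restr iv sA sB.
apply/(pfeasP _ iv'); case/(pfeasP _ iv): f => fb fE; split.
  move=> v vV; apply: fb; exact: (fintype.subsetP (finset.setUSS sA sB)).
by move=> e; rewrite /restrE inE => /andP[eE _]; exact: fE.
Qed.

Lemma alg2 (x y a b : R) : 0 < a -> 0 < b -> x * (1 + b / a) <= 1 -> y * (1 + a / b) <= 1 ->
  x + y <= 1.
Proof.
move=> ha hb h1 h2.
have e1 : x * (1 + b / a) = x * (a + b) / a by field; rewrite gt_eqF.
have e2 : y * (1 + a / b) = y * (a + b) / b by field; rewrite gt_eqF.
rewrite e1 ler_pdivrMr // mul1r in h1.
rewrite e2 ler_pdivrMr // mul1r in h2.
nra.
Qed.

Lemma alg3 (a a' b b' W : R) : 0 <= a -> 0 <= a' -> 0 <= b -> 0 <= b' ->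
  0 < a + a' -> 0 < b + b' -> a * b <= a' * b' -> 0 < W ->
  a * W / (a + a') + b * W / (b + b') <= W.
Proof.
move=> ha ha' hb hb' hA hB hab hW.
have e : a * W / (a + a') + b * W / (b + b') =
  W * ((a * (b + b') + b * (a + a')) / ((a + a') * (b + b'))).
  field; apply/andP; split; rewrite gt_eqF //.
rewrite e; apply: ler_piMr; first exact: ltW.
rewrite ler_pdivrMr ?mulr_gt0 //; nra.
Qed.

Lemma MC A B E q zE zV : optprob P A B E q zE zV -> inv P A B E ->
  [/\ forall v, v \in A :|: B -> 0 < q v <= 1,
      forall e, e \in E -> q e.1 + q e.2 <= 1 &
      forall q', primal_feas A B E q' ->
        \sum_(v in A :|: B) P v / q v * q' v <= Pw P (A :|: B)].
Proof.
elim=> {A B E q zE zV}.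
- move=> A B E y zE zV q1 zE1 zV1 q2 zE2 zV2 lo sp H1 IH1 H2 IH2 iv.
  case: (iv) => dAB sE hP.
  have [hA hB] := PwA_pos iv sp.
  have iv1 := inv_restr iv (plus_sub y A) (minus_sub y B).
  have iv2 := inv_restr iv (minus_sub y A) (plus_sub y B).
  case: (IH1 iv1) => pos1 edge1 grad1; case: (IH2 iv2) => pos2 edge2 grad2.
  have dV := part_disj y dAB.
  split.
  + move=> v; rewrite (part_eq A B y) finset.in_setU => /orP[vV1|vV2].
      by rewrite /= vV1; apply: pos1.
    by rewrite /= (disjointFl dV vV2); apply: pos2.
  + move=> [a b] abE; case: (inv_edge iv abE) => /= aA bB _.
    have aV : a \in A :|: B by rewrite inE aA.
    have bV : b \in A :|: B by rewrite inE bB orbT.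
    rewrite /= !finset.in_setU !plusE !minusE aA bB (notAB dAB bB) (notBA dAB aA) /=.
    case ya: (y a == 1); case yb: (y b == 1) => /=.
    * by move: (y_edge' iv lo abE (eqP ya)); rewrite yb.
    * apply: (edge1 (a, b)).
      by rewrite restrE_in abE plusE aA ya minusE bB yb.
    * apply: (edge2 (a, b)).
      by rewrite restrE_in abE plusE bB yb minusE aA ya.
    * have hqa : q2 a * (1 + Pw P B / Pw P A) <= 1.
        apply: (LA H2 iv2); first by apply: divr_gt0.
          move=> Sa sS; have h := hall2 iv lo hA hB sS.
          apply: le_trans (le_trans _ h) _.
            by rewrite mulrC mulrA.
          apply: (Pw_mono iv2).
            apply/fintype.subsetP => b'; rewrite !nbrBE => /andP[bB' /existsP[a' /andP[a'S abE']]].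
            rewrite bB' /=; apply/existsP; exists a'; rewrite a'S /=.
            by rewrite restrE_in abE' bB' (fintype.subsetP sS a' a'S).
          apply/fintype.subsetP => b'; rewrite nbrBE => /andP[bB' _].
          by rewrite inE bB' orbT.
        by rewrite minusE aA ya.
      have hqb : q1 b * (1 + Pw P A / Pw P B) <= 1.
        apply: (LB H1 iv1); first by apply: divr_gt0.
          move=> Tb sT; have h := hall1 iv lo hA hB sT.
          apply: le_trans (le_trans _ h) _.
            by rewrite mulrC mulrA.
          apply: (Pw_mono iv1).
            apply/fintype.subsetP => a'; rewrite !nbrAE => /andP[aA' /existsP[b' /andP[b'T abE']]].
            rewrite aA' /=; apply/existsP; exists b'; rewrite b'T /=.
            by rewrite restrE_in abE' aA' (fintype.subsetP sT b' b'T).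
          apply/fintype.subsetP => a'; rewrite nbrAE => /andP[aA' _].
          by rewrite inE aA'.
        by rewrite minusE bB yb.
      exact: alg2 hA hB hqa hqb.
  + move=> q' f'.
    rewrite (part_eq A B y) sum_setU // Pw_U //; apply: lerD.
      rewrite (eq_bigr (fun v => P v / q1 v * q' v)); last by move=> v vV1; rewrite /= vV1.
      apply: grad1; exact: pfeas_restr iv (plus_sub y A) (minus_sub y B) f'.
    rewrite (eq_bigr (fun v => P v / q2 v * q' v)); last first.
      by move=> v vV2; rewrite /= (disjointFl dV vV2).
    apply: grad2; exact: pfeas_restr iv (minus_sub y A) (plus_sub y B) f'.
- move=> A B E y zE zV lo nsp iv.
  case: (iv) => dAB sE hP.
  have hA0 : 0 <= Pw P A by apply: (Pw_nneg iv (finset.subsetUl A B)).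
  have hB0 : 0 <= Pw P B by apply: (Pw_nneg iv (finset.subsetUr A B)).
  have qa v : v \in A -> qbase P A B v = Pw P A / (Pw P A + Pw P B).
    by move=> vA; rewrite /qbase vA WU.
  have qb v : v \in B -> qbase P A B v = Pw P B / (Pw P A + Pw P B).
    by move=> vB; rewrite /qbase (notAB dAB vB) vB WU.
  have PAp v : v \in A -> 0 < Pw P A.
    by move=> vA; apply: (Pw_gt0 _ vA) => w wA; apply: hP; rewrite inE wA.
  have PBp v : v \in B -> 0 < Pw P B.
    by move=> vB; apply: (Pw_gt0 _ vB) => w wB; apply: hP; rewrite inE wB orbT.
  split.
  + move=> v; rewrite inE => /orP[vA|vB].
      have h := PAp v vA; rewrite qa //; apply/andP; split.
        by apply: divr_gt0 => //; lra.
      by rewrite ler_pdivrMr; lra.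
    have h := PBp v vB; rewrite qb //; apply/andP; split.
      by apply: divr_gt0 => //; lra.
    by rewrite ler_pdivrMr; lra.
  + move=> e eE; case: (inv_edge iv eE) => h1 h2 _.
    have h := PAp _ h1.
    by rewrite qa // qb // -mulrDl divff // gt_eqF //; lra.
  + move=> q' f'.
    case: (boolP ((0 < Pw P A) && (0 < Pw P B))) => [/andP[hA hB]|hn].
    * rewrite (eq_bigr (fun v => rvec P A B v * q' v)); last first.
        move=> v; rewrite inE => /orP[vA|vB].
          rewrite qa // /rvec hA hB vA /= (WU P dAB); congr (_ * _); field.
          by rewrite !gt_eqF //; lra.
        rewrite qb // /rvec hA hB (notAB dAB vB) /= (WU P dAB); congr (_ * _); field.
        by rewrite !gt_eqF //; lra.
      have := lin_opt lo f'; rewrite /primal_obj => h; apply: le_trans h _.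
      have sP : plus_part y A :|: plus_part y B \subset A :|: B.
        exact: finset.setUSS (plus_sub y A) (plus_sub y B).
      rewrite (eq_bigr (fun v => if v \in plus_part y A :|: plus_part y B
                                 then rvec P A B v else 0)); last first.
        move=> v vV; rewrite finset.in_setU !plusE.
        case yv: (y v == 1).
          rewrite (eqP yv) mulr1; move: vV; rewrite inE.
          by case: (v \in A); case: (v \in B).
        by rewrite (lin01 lo vV (negbT yv)) mulr0 !andbF.
      rewrite sum_sub_cond // sum_setU; last first.
        exact: disjointWl (plus_sub y A) (disjointWr (plus_sub y B) dAB).
      rewrite (sum_rvecA dAB hA hB (plus_sub y A)) (sum_rvecB dAB hA hB (plus_sub y B)).
      have eA := split_set A y; have eB := split_set B y.
      have ePA : Pw P A = Pw P (plus_part y A) + Pw P (minus_part y A).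
        by rewrite {1}eA Pw_U // split_disj.
      have ePB : Pw P B = Pw P (plus_part y B) + Pw P (minus_part y B).
        by rewrite {1}eB Pw_U // split_disj.
      rewrite ePA ePB; apply: alg3.
      - apply: (Pw_nneg iv); exact: fintype.subset_trans (plus_sub y A) (finset.subsetUl A B).
      - apply: (Pw_nneg iv); exact: fintype.subset_trans (minus_sub y A) (finset.subsetUl A B).
      - apply: (Pw_nneg iv); exact: fintype.subset_trans (plus_sub y B) (finset.subsetUr A B).
      - apply: (Pw_nneg iv); exact: fintype.subset_trans (minus_sub y B) (finset.subsetUr A B).
      - by rewrite -ePA.
      - by rewrite -ePB.
      - by move: nsp; rewrite /split_cond -leNgt.
      - by rewrite WU // addr_gt0.
    * have q1 : forall v, v \in A :|: B -> qbase P A B v = 1.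
        move=> v; rewrite inE => /orP[vA|vB].
          have h := PAp v vA; move: hn; rewrite h /= -leNgt => hB'.
          rewrite qa //; have -> : Pw P B = 0 by apply/le_anti; rewrite hB' hB0.
          by rewrite addr0 divff // gt_eqF.
        have h := PBp v vB; move: hn; rewrite h andbT -leNgt => hA'.
        rewrite qb //; have -> : Pw P A = 0 by apply/le_anti; rewrite hA' hA0.
        by rewrite add0r divff // gt_eqF.
      rewrite /Pw; apply: ler_sum => v vV.
      rewrite q1 // divr1; apply: ler_piMr; first exact: ltW (hP v vV).
      by case/(pfeasP _ iv): f' => fb _; case/andP: (fb v vV).
Qed.

End Main.


Section Corr.
Variables (R : realType) (T : finType) (P : T -> R).

Lemma ln_ineq (x : R) : 0 < x -> ln x <= x - 1 - (Num.sqrt x - 1) ^+ 2.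
Proof.
move=> hx.
have sx : 0 < Num.sqrt x by rewrite sqrtr_gt0.
have sq : Num.sqrt x ^+ 2 = x by rewrite sqr_sqrtr // ltW.
have e : ln x = ln (Num.sqrt x) *+ 2 by rewrite -lnXn // sq.
have h : ln (Num.sqrt x) <= Num.sqrt x - 1.
  have e1 : 1 + (Num.sqrt x - 1) = Num.sqrt x by rewrite addrC subrK.
  have := @le_ln1Dx R (Num.sqrt x - 1); rewrite e1; apply; lra.
rewrite e mulr2n; nra.
Qed.

Lemma pointwise (p a b : R) : 0 <= p -> 0 < a -> 0 < b ->
  - (p * ln a) + p * (Num.sqrt (b / a) - 1) ^+ 2 <= - (p * ln b) + (p / a * b - p).
Proof.
move=> hp ha hb.
have hx : 0 < b / a by apply: divr_gt0.
have h := ln_ineq hx.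
have el : ln (b / a) = ln b - ln a by rewrite ln_div // posrE.
have ex : p / a * b = p * (b / a) by rewrite mulrAC mulrA.
rewrite el in h; rewrite ex.
have h2 : p * (ln b - ln a) <= p * (b / a - 1 - (Num.sqrt (b / a) - 1) ^+ 2).
  exact: ler_wpM2l.
nra.
Qed.

Lemma corr A B E q zE zV : optprob P A B E q zE zV -> inv P A B E ->
  unique_minimizer P A B E q.
Proof.
move=> H iv; case: (MC H iv) => pos edg grad.
case: (iv) => dAB sE hP.
have fq : primal_feas A B E q.
  apply/(pfeasP _ iv); split => //.
  by move=> v vV; case/andP: (pos v vV) => h1 h2; rewrite (ltW h1) h2.
have hq : [forall v in A :|: B, 0 < q v].
  by apply/forall_inP => v vV; case/andP: (pos v vV).
have nq : neglog_obj P (A :|: B) q = (\sum_(v in A :|: B) - (P v * ln (q v)))%:E.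
  by rewrite /neglog_obj hq.
have key : forall q', primal_feas A B E q' -> [forall v in A :|: B, 0 < q' v] ->
   \sum_(v in A :|: B) - (P v * ln (q v)) +
   \sum_(v in A :|: B) P v * (Num.sqrt (q' v / q v) - 1) ^+ 2 <=
   \sum_(v in A :|: B) - (P v * ln (q' v)).
  move=> q' f' /forall_inP hq'.
  have g := grad q' f'.
  rewrite -big_split /=.
  apply: le_trans (ler_sum _ (fun v (vV : v \in A :|: B) =>
    pointwise (ltW (hP v vV)) (proj1 (andP (pos v vV))) (hq' v vV))) _.
  rewrite big_split /= sumrB.
  move: g; rewrite /Pw => g; lra.
split => //; split.
  move=> q' f'; rewrite nq /neglog_obj; case: ifP => hpos; last by rewrite leey.
  rewrite lee_fin; have := key q' f' hpos.
  have : 0 <= \sum_(v in A :|: B) P v * (Num.sqrt (q' v / q v) - 1) ^+ 2.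
    apply: sumr_ge0 => v vV; apply: mulr_ge0; [exact: ltW (hP v vV) | exact: sqr_ge0].
  move=> h1 h2; lra.
move=> q' f' hle v vV.
move: hle; rewrite nq /neglog_obj; case: ifP => hpos; last by rewrite leNgt ltey.
rewrite lee_fin => hle; have := key q' f' hpos.
have h0 : forall w, w \in A :|: B -> 0 <= P w * (Num.sqrt (q' w / q w) - 1) ^+ 2.
  move=> w wV; apply: mulr_ge0; [exact: ltW (hP w wV) | exact: sqr_ge0].
have hs : 0 <= \sum_(v in A :|: B) P v * (Num.sqrt (q' v / q v) - 1) ^+ 2.
  by apply: sumr_ge0.
move=> h.
have z : \sum_(v in A :|: B) P v * (Num.sqrt (q' v / q v) - 1) ^+ 2 = 0.
  apply/le_anti; rewrite hs andbT; lra.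
have := psumr_eq0P h0 z vV.
move/eqP; rewrite mulf_eq0 (gt_eqF (hP v vV)) /= sqrf_eq0 subr_eq0 => /eqP s1.
have hqv : 0 < q v by case/andP: (pos v vV).
have hq'v : 0 < q' v by move/forall_inP: hpos => /(_ v vV).
have x1 : q' v / q v = 1.
  by rewrite -(@sqr_sqrtr _ (q' v / q v)) ?s1 ?expr1n // ltW // divr_gt0.
have nz : q v != 0 by rewrite gt_eqF.
by rewrite -(divfK nz (q' v)) x1 mul1r.
Qed.

End Corr.


Lemma exists_min_box (R : realType) (n : nat) (M : R) (Phi : 'rV[R]_n -> R) :
  0 <= M -> continuous Phi ->
  exists2 c : 'rV[R]_n, (forall i, 0 <= c ord0 i <= M) &
    forall v : 'rV[R]_n, (forall i, 0 <= v ord0 i <= M) -> Phi c <= Phi v.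
Proof.
move=> M0 cPhi.
pose B := [set v : 'rV[R]_n | forall i, `[0, M]%classic (v ord0 i)]%classic.
have cB : compact B by exact: (@rV_compact _ n (fun=> `[0, M]%classic) (fun=> @segment_compact _ 0 M)).
have B0 : (B !=set0)%classic.
  by exists 0; move=> i /=; rewrite mxE in_itv /= lexx M0.
have [c cB' cmin] := compact_EVT_min B0 cB (@continuous_subspaceT _ _ B Phi cPhi).
exists c.
  move=> i; move: cB'; rewrite inE => /(_ i) /=; by rewrite in_itv.
move=> v vB; apply: cmin; rewrite inE => i /=; by rewrite in_itv vB.
Qed.

Lemma cont_sum (R : realType) (n : nat) (I : finType) (Q : pred I)
   (F : I -> 'rV[R]_n -> R) :
  (forall i, continuous (F i)) -> continuous (fun v => \sum_(i | Q i) F i v).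
Proof.
move=> cF.
rewrite /index_enum; elim: (Finite.enum I) => [|j s IH].
  have -> : (fun v : 'rV[R]_n => \sum_(i <- [::] | Q i) F i v) = fun=> 0.
    by apply/funext => v; rewrite big_nil.
  exact: cst_continuous.
have -> : (fun v : 'rV[R]_n => \sum_(i <- j :: s | Q i) F i v) =
   (fun v => (if Q j then F j v else 0) + \sum_(i <- s | Q i) F i v).
  by apply/funext => v; rewrite big_cons; case: (Q j); rewrite ?add0r.
move=> x; apply: (@continuousD _ _ _ (fun v => if Q j then F j v else 0)); last exact: IH.
by case: (Q j); [exact: cF | exact: cst_continuous].
Qed.

Lemma cont_max0 (R : realType) (n : nat) (f : 'rV[R]_n -> R) :
  continuous f -> continuous (fun v => Num.max 0 (f v)).
Proof.
move=> cf x.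
apply: (@continuous_max _ _ (fun=> 0) f x); [exact: cst_continuous | exact: cf].
Qed.

Section Term.
Variables (R : realType) (T : finType) (P : T -> R).

Definition ind (S : {set T}) : T -> R := fun v => if v \in S then 1 else 0.
Definition fracS (V : {set T}) (y : T -> R) : {set T} := [set v in V | (0 < y v) && (y v < 1)].

Lemma pfeas_ext A B E (y1 y2 : T -> R) : inv P A B E ->
  (forall v, v \in A :|: B -> y1 v = y2 v) -> primal_feas A B E y1 -> primal_feas A B E y2.
Proof.
move=> iv h f; apply/(pfeasP _ iv); case/(pfeasP _ iv): f => fb fE; split.
  by move=> v vV; rewrite -h //; exact: fb.
move=> e eE; case: (inv_edge iv eE) => h1 h2 _.
rewrite -h; last by rewrite inE h1.
rewrite -h; last by rewrite inE h2 orbT.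
exact: fE.
Qed.

Lemma exists_min (F : {set T}) (f : T -> R) : F != finset.set0 ->
  exists2 v0, v0 \in F & forall v, v \in F -> f v0 <= f v.
Proof.
case/finset.set0Pn => x xF.
case: (@arg_minP _ _ T x (fun v => v \in F) f xF) => v0 v0F h.
by exists v0.
Qed.

Lemma exists_maxS (Q : pred {set T}) (f : {set T} -> R) S0 : Q S0 ->
  exists2 S, Q S & forall S', Q S' -> f S' <= f S.
Proof.
move=> h; case: (@arg_maxP _ _ _ S0 Q f h) => S QS hmax.
by exists S.
Qed.

Lemma integral0 A B E (r : T -> R) (y : T -> R) : inv P A B E -> primal_feas A B E y ->
  fracS (A :|: B) y = finset.set0 ->
  exists2 S : {set T}, primal_feas A B E (ind S) &
    \sum_(v in A :|: B) r v * y v <= \sum_(v in A :|: B) r v * ind S v.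
Proof.
move=> iv f F0; case/(pfeasP _ iv): (f) => fb fE.
pose S := [set v in A :|: B | y v == 1].
have hv : forall v, v \in A :|: B -> ind S v = y v.
  move=> v vV; rewrite /ind inE vV /=.
  have nf : v \notin fracS (A :|: B) y by rewrite F0 finset.in_set0.
  move: nf; rewrite /fracS inE vV /= negb_and -!leNgt => nf.
  case/andP: (fb v vV) => h0 h1.
  case: eqP => [->//|ne].
  case/orP: nf => h; first by apply/le_anti; rewrite h h0.
  by exfalso; apply: ne; apply/le_anti; rewrite h h1.
exists S; first exact: (pfeas_ext iv (fun v vV => esym (hv v vV)) f).
by rewrite le_eqVlt; apply/orP; left; apply/eqP; apply: eq_bigr => v vV; rewrite hv.
Qed.

Lemma integral_step A B E (r : T -> R) (y : T -> R) : inv P A B E -> primal_feas A B E y ->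
  fracS (A :|: B) y != finset.set0 ->
  exists y2, [/\ primal_feas A B E y2,
    \sum_(v in A :|: B) r v * y v <= \sum_(v in A :|: B) r v * y2 v &
    (#|fracS (A :|: B) y2| < #|fracS (A :|: B) y|)%N].
Proof.
move=> iv f Fn; case: (iv) => dAB sE hP.
case/(pfeasP _ iv): (f) => fb fE.
pose V := A :|: B.
pose F := fracS V y.
have FE v : (v \in F) = [&& v \in V, 0 < y v & y v < 1] by rewrite /F /fracS inE.
pose s := \sum_(v in V) r v * (if v \in F then (if v \in A then 1 else -1) else 0).
pose c v : R := if (v \in A) == (0 <= s) then 1 else -1.
pose key v : R := if (v \in A) == (0 <= s) then 1 - y v else y v.
have [v0 v0F hmin] := exists_min key Fn.
pose th := key v0.
have hth : 0 < th.
  move: (v0F); rewrite FE => /and3P[_ h0 h1]; rewrite /th /key; case: ifP => _; lra.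
pose y2 v := y v + th * (if v \in F then c v else 0).
have y2out v : v \notin F -> y2 v = y v by move=> /negbTE vF; rewrite /y2 vF mulr0 addr0.
have infrac v : v \in F -> 0 < y v < 1 by rewrite FE => /and3P[_ -> ->].
have notfrac v : v \in V -> v \notin F -> y v <= 0 \/ 1 <= y v.
  move=> vV; rewrite FE vV /= negb_and -!leNgt => /orP[h|h]; by [left|right].
have box v : v \in V -> 0 <= y2 v <= 1.
  move=> vV; case vF: (v \in F); last by rewrite y2out ?vF //; exact: fb.
  have hk := hmin v vF; case/andP: (infrac v vF) => h0 h1.
  rewrite /y2 vF /c; move: hk; rewrite -/th /key; case: ifP => _ hk; apply/andP; split; lra.
have fE2 : forall e, e \in E -> y2 e.1 + y2 e.2 <= 1.
  move=> e eE; case: (inv_edge iv eE) => h1 h2 _.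
  have V1 : e.1 \in V by rewrite /V inE h1.
  have V2 : e.2 \in V by rewrite /V inE h2 orbT.
  have hE := fE e eE; have b1 := box _ V1; have b2 := box _ V2.
  case/andP: b1 => b10 b11; case/andP: b2 => b20 b21.
  case F1: (e.1 \in F); case F2: (e.2 \in F).
  - rewrite /y2 F1 F2 /c h1 (notAB dAB h2) /=; case: (0 <= s) => /=; lra.
  - rewrite (y2out e.2) ?F2 //.
    case/andP: (infrac _ F1) => a0 a1.
    case: (notfrac _ V2 (negbT F2)) => hb; lra.
  - rewrite (y2out e.1) ?F1 //.
    case/andP: (infrac _ F2) => a0 a1.
    case: (notfrac _ V1 (negbT F1)) => hb; lra.
  - by rewrite (y2out e.1) ?F1 // (y2out e.2) ?F2.
have objE : \sum_(v in V) r v * y2 v =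
    \sum_(v in V) r v * y v + th * (if 0 <= s then s else - s).
  have -> : (if 0 <= s then s else - s) =
      \sum_(v in V) r v * (if v \in F then c v else 0).
    rewrite /c; case: (0 <= s).
      by apply: eq_bigr => v _; case: (v \in F); case: (v \in A).
    rewrite /s -sumrN; apply: eq_bigr => v _; case: (v \in F); case: (v \in A) => /=;
      by rewrite ?mulr0 ?oppr0 ?mulrN1 ?mulr1 ?opprK.
  rewrite mulr_sumr -big_split /=; apply: eq_bigr => v _; rewrite /y2.
  by rewrite mulrDr mulrCA.
have s'0 : 0 <= (if 0 <= s then s else - s).
  by case: ifP => // /negbT; rewrite -ltNge => h; lra.
exists y2; split.
- apply/(pfeasP _ iv); split; [exact: box | exact: fE2].
- by rewrite objE lerDl mulr_ge0 // ltW.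
- apply: proper_card; apply/properP; split.
    apply/fintype.subsetP => v; rewrite /fracS inE => /and3P[vV h0 h1].
    case vF: (v \in F) => //.
    rewrite y2out ?vF // in h0 h1.
    by rewrite FE vV h0 h1 in vF.
  exists v0 => //.
  rewrite /fracS inE negb_and; apply/orP; right.
  rewrite /y2 v0F /c /th /key; case: ifP => _; apply/negP => /andP[h0 h1]; lra.
Qed.

Lemma integral A B E (r : T -> R) : inv P A B E -> forall n (y : T -> R),
  (#|fracS (A :|: B) y| <= n)%N -> primal_feas A B E y ->
  exists2 S : {set T}, primal_feas A B E (ind S) &
    \sum_(v in A :|: B) r v * y v <= \sum_(v in A :|: B) r v * ind S v.
Proof.
move=> iv; elim=> [|n IH] y hc f.
  apply: integral0 => //; apply/eqP; rewrite -cards_eq0 -leqn0 //.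
case: (boolP (fracS (A :|: B) y == finset.set0)) => [/eqP F0|Fn].
  exact: integral0.
have [y2 [f2 le2 lt2]] := integral_step r iv f Fn.
have hc2 : (#|fracS (A :|: B) y2| <= n)%N.
  by rewrite -ltnS (leq_trans lt2 hc).
have [S fS leS] := IH y2 hc2 f2.
by exists S => //; exact: le_trans le2 leS.
Qed.

End Term.


Section Term2.
Variables (R : realType) (T : finType) (P : T -> R).

Lemma rvec_ge0 A B E v : inv P A B E -> v \in A :|: B -> 0 <= rvec P A B v.
Proof.
move=> iv vV; case: (iv) => dAB sE hP.
have hW : 0 <= Pw P (A :|: B) by apply: (Pw_nneg iv (fintype.subxx _)).
rewrite /rvec; case: ifP => [/andP[hA hB]|_]; last exact: ltW (hP v vV).
case: ifP => _; apply: divr_ge0; try apply: mulr_ge0; try exact: ltW.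
- exact: ltW (hP v vV).
- exact: hW.
- exact: ltW (hP v vV).
- exact: hW.
Qed.

Lemma exists_dual A B E : inv P A B E -> exists zE zV,
  dual_feas P A B E zE zV /\
  forall zE' zV', dual_feas P A B E zE' zV' -> dual_obj A B E zE zV <= dual_obj A B E zE' zV'.
Proof.
move=> iv; case: (iv) => dAB sE hP.
pose V := A :|: B.
pose r := rvec P A B.
have r0 : forall v, v \in V -> 0 <= r v by move=> v vV; exact: rvec_ge0 iv vV.
pose M := \sum_(v in V) r v.
have M0 : 0 <= M by apply: sumr_ge0.
have rM : forall v, v \in V -> r v <= M.
  move=> v vV; rewrite /M (bigD1 v) //= lerDl; apply: sumr_ge0 => w /andP[wV _].
  exact: r0.
pose Phi := fun z : 'rV[R]_(#|{: T * T}|) =>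
  \sum_(e in E) z ord0 (enum_rank e) +
  \sum_(x in V) Num.max 0 (r x - \sum_(e in E | incid e x) z ord0 (enum_rank e)).
have cPhi : continuous Phi.
  move=> z; apply: continuousD.
    by apply: cont_sum => e; exact: coord_continuous.
  apply: cont_sum => x; apply: cont_max0 => w; apply: continuousB.
    exact: cst_continuous.
  by apply: cont_sum => e; exact: coord_continuous.
have [c cbox cmin] := exists_min_box M0 cPhi.
pose zE := fun e : T * T => c ord0 (enum_rank e).
pose zV := fun x => Num.max 0 (r x - \sum_(e in E | incid e x) zE e).
exists zE, zV; split.
  split; first by move=> e _; case/andP: (cbox (enum_rank e)).
  split; first by move=> v _; rewrite /zV le_max lexx.
  move=> v _; rewrite /zV.
  have : r v - \sum_(e in E | incid e v) zE e <=
         Num.max 0 (r v - \sum_(e in E | incid e v) zE e) by rewrite le_max lexx orbT.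
  rewrite /r; lra.
move=> zE' zV' [hE' [hV' hc']].
pose m e := Num.min (Num.max 0 (zE' e)) M.
pose v' := \row_(i < #|{: T * T}|) m (enum_val i).
have v'E e : v' ord0 (enum_rank e) = m e by rewrite mxE enum_rankK.
have boxv : forall i, 0 <= v' ord0 i <= M.
  move=> i; rewrite mxE /m le_min ge_min lexx orbT M0 andbT le_max lexx //.
have h1 := cmin v' boxv.
have -> : dual_obj A B E zE zV = Phi c by [].
apply: le_trans h1 _.
rewrite /Phi /dual_obj; apply: lerD.
  apply: ler_sum => e eE; rewrite v'E /m ge_min; apply/orP; left.
  by rewrite ge_max lexx hE'.
apply: ler_sum => x xV.
rewrite (eq_bigr (fun e => m e)); last by move=> e _; rewrite v'E.
case: (boolP [forall e in E, incid e x ==> (zE' e <= M)]) => hall.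
  have -> : \sum_(e in E | incid e x) m e = \sum_(e in E | incid e x) zE' e.
    apply: eq_bigr => e /andP[eE ie]; move/forall_inP: hall => /(_ e eE).
    rewrite ie /= => h; rewrite /m (max_r (hE' e eE)) (min_l h) //.
  rewrite ge_max hV' //=; have := hc' x xV; rewrite /r; lra.
move: hall; rewrite negb_forall_in => /existsP[e /andP[eE]].
rewrite negb_imply -ltNge => /andP[ie hgt].
have me : m e = M.
  rewrite /m (max_r (hE' e eE)) min_r //; exact: ltW.
have hs : M <= \sum_(e in E | incid e x) m e.
  rewrite (bigD1 e) /=; last by rewrite eE ie.
  rewrite me lerDl; apply: sumr_ge0 => e' _.
  by rewrite /m le_min le_max lexx M0.
rewrite ge_max hV' //=; have := rM x xV; have := hV' x xV; lra.
Qed.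

Lemma exists_lin A B E : inv P A B E -> exists y zE zV, linopt P A B E y zE zV.
Proof.
move=> iv; case: (iv) => dAB sE hP.
pose Q := fun S : {set T} => [forall e in E, ~~ ((e.1 \in S) && (e.2 \in S))].
pose obj := fun S : {set T} => \sum_(v in A :|: B) rvec P A B v * ind R S v.
have Q0 : Q finset.set0 by apply/forall_inP => e _; rewrite !finset.in_set0.
have [S QS Smax] := exists_maxS obj Q0.
have QP : forall S', Q S' -> primal_feas A B E (ind R S').
  move=> S' /forall_inP h; apply/(pfeasP _ iv); split.
    by move=> v _; rewrite /ind; case: ifP => _; rewrite ?lexx ?ler01.
  move=> e eE; have := h e eE; rewrite /ind.
  by case: ifP => _; case: ifP => _ //=; rewrite ?addr0 ?add0r ?lexx ?ler01.
have PQ : forall S', primal_feas A B E (ind R S') -> Q S'.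
  move=> S' /(pfeasP _ iv) [_ hE]; apply/forall_inP => e eE; apply/negP => /andP[i1 i2].
  by move: (hE e eE); rewrite /ind i1 i2 => h; lra.
have [zE [zV [df dopt]]] := exists_dual iv.
exists (ind R S), zE, zV; split.
  by move=> v _; rewrite /ind; case: ifP => _; [right|left].
split; first exact: QP.
split.
  move=> y' f'; have [S' fS' le'] := integral (rvec P A B) iv (leqnn _) f'.
  apply: le_trans le' _; exact: Smax (PQ _ fS').
by split.
Qed.

Lemma card_sub1 A B E y : inv P A B E -> split_cond P A B y ->
  (#|plus_part y A :|: minus_part y B| < #|A :|: B|)%N.
Proof.
move=> iv sp; case: (iv) => dAB _ _.
have [_ hb] := split_pos iv sp.
case: (set_0Vmem (plus_part y B)) => [e0|[b bB]].
  by move: hb; rewrite e0 /Pw big_set0 ltxx.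
apply: proper_card; apply/properP; split.
  exact: finset.setUSS (plus_sub y A) (minus_sub y B).
move: bB; rewrite plusE => /andP[bB yb].
exists b; first by rewrite inE bB orbT.
by rewrite finset.in_setU plusE minusE (notAB dAB bB) bB yb.
Qed.

Lemma card_sub2 A B E y : inv P A B E -> split_cond P A B y ->
  (#|minus_part y A :|: plus_part y B| < #|A :|: B|)%N.
Proof.
move=> iv sp; case: (iv) => dAB _ _.
have [ha _] := split_pos iv sp.
case: (set_0Vmem (plus_part y A)) => [e0|[a aA]].
  by move: ha; rewrite e0 /Pw big_set0 ltxx.
apply: proper_card; apply/properP; split.
  exact: finset.setUSS (minus_sub y A) (plus_sub y B).
move: aA; rewrite plusE => /andP[aA ya].
exists a; first by rewrite inE aA.
by rewrite finset.in_setU plusE minusE (notBA dAB aA) aA ya.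
Qed.

Lemma term n A B E : (#|A :|: B| <= n)%N -> inv P A B E -> optprob_terminates P A B E.
Proof.
elim: n A B E => [|n IH] A B E hc iv; constructor.
- exact: exists_lin iv.
- move=> y zE zV lo sp; have := card_sub1 iv sp; rewrite leqn0 in hc.
  by rewrite (eqP hc).
- move=> y zE zV lo sp; have := card_sub2 iv sp; rewrite leqn0 in hc.
  by rewrite (eqP hc).
- exact: exists_lin iv.
- move=> y zE zV lo sp; apply: IH.
    by rewrite -ltnS (leq_trans (card_sub1 iv sp) hc).
  exact: inv_restr iv (plus_sub y A) (minus_sub y B).
- move=> y zE zV lo sp; apply: IH.
    by rewrite -ltnS (leq_trans (card_sub2 iv sp) hc).
  exact: inv_restr iv (minus_sub y A) (plus_sub y B).
Qed.

End Term2.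

Theorem theorem3 (R : realType) (T : finType) (V1 Vm1 : {set T})
    (E : {set T * T}) (P : T -> R) :
  [disjoint V1 & Vm1] ->
  E \subset finset.setX V1 Vm1 ->
  (forall v, v \in V1 :|: Vm1 -> 0 < P v) ->
  optprob_terminates P V1 Vm1 E /\
  (forall q zE zV, optprob P V1 Vm1 E q zE zV -> unique_minimizer P V1 Vm1 E q).
Proof.
move=> d s hP.
have iv : inv P V1 Vm1 E by split.
split; first exact: term (leqnn _) iv.
move=> q zE zV H; exact: corr H iv.
Qed.
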